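(* Let $1\le k<n$, let $w=(y_1,\dots,y_{k-r},\overline{z_r},\dots,\overline{z_1},v_1,\dots,v_{n-k})\in W^{OG(k,2n+1)}$ and $\lambda=\mathrm{Inv}(w)$. Then for $1\le i\le k$, \[\lambda^{(1)}_i=\begin{cases} n+1-k+|\{l: z_i<v_l\}| & \text{if } i\le r,\\ |\{l: y_{k+1-i}>v_l\}| & \text{if } i>r,\end{cases}\qquad \lambda^{(2)}_i=\begin{cases} |\{q: z_i<z_q\}|+|\{t: z_i<y_t\}| & \text{if } i\le r,\\ 0 & \text{if } i>r.\end{cases}\]
   Context: Root system $B_n$: positive roots $e_a\pm e_b$ ($a<b$), $e_a$. $W^{OG(k,2n+1)}$ is the set of signed permutations $w=(y_1,\dots,y_{k-r},\overline{z_r},\dots,\overline{z_1},v_1,\dots,v_{n-k})$ of $1,\dots,n$ (bars = negative entries) with $0\le r\le k$, $y_1<\dots<y_{k-r}$, $z_r>\dots>z_1$, $v_1<\dots<v_{n-k}$; so the entry in position $k+1-i$ is $\overline{z_i}$ if $i\le r$ and $y_{k+1-i}$ if $i>r$. $w$ acts by $e_a\mapsto\pm e_{|w(a)|}$ (minus if barred), and $\mathrm{Inv}(w)$ is the set of positive roots sent to negative roots. For a set $S$ of positive roots, $\lambda^{(1)}_i$ is the number of roots of $S$ among $e_{k+1-i}\pm e_b$ ($b>k$) and $e_{k+1-i}$, and $\lambda^{(2)}_i$ is the number of roots of $S$ of the form $e_a+e_{k+1-i}$ with $a<k+1-i$. *)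

(* Defs.v *)
From mathcomp Require Import all_boot all_order all_algebra.
Unset Printing Implicit Defensive.
Import Order.TTheory GRing.Theory Num.Theory.
Local Open Scope ring_scope.

(* Conventions: positions/indices are 1-based natural numbers 1..n.
   Vectors of R^n (coordinates in Z suffice for roots) are {ffun 'I_n -> int},
   coordinate j : 'I_n standing for position j+1. *)

Definition ebas (n a : nat) : {ffun 'I_n -> int} :=
  [ffun j : 'I_n => ((j.+1 == a)%N)%:Z].

Definition posroots (n : nat) : seq {ffun 'I_n -> int} :=
  [seq ebas n a - ebas n b | a <- iota 1 n, b <- iota a.+1 (n - a)] ++
  [seq ebas n a + ebas n b | a <- iota 1 n, b <- iota a.+1 (n - a)] ++
  [seq ebas n a | a <- iota 1 n].

Definition negroots (n : nat) : seq {ffun 'I_n -> int} :=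
  [seq - x | x <- posroots n].

(* A signed permutation in one-line notation: w : nat -> int, w a = entry in
   position a (negative = barred). It acts linearly by e_a |-> +- e_{|w a|}. *)
Definition sgnint (x : int) : int := if x < 0 then -1 else 1.

Definition act (n : nat) (w : nat -> int) (x : {ffun 'I_n -> int})
  : {ffun 'I_n -> int} :=
  [ffun j : 'I_n => \sum_(a < n)
      x a * (if (absz (w a.+1) == j.+1)%N then sgnint (w a.+1) else 0)].

Definition Inv (n : nat) (w : nat -> int) : pred {ffun 'I_n -> int} :=
  fun x => (x \in posroots n) && (act n w x \in negroots n).

Definition lam1 (n k : nat) (S : pred {ffun 'I_n -> int}) (i : nat) : nat :=
  let p := (k.+1 - i)%N in
  count S ([seq ebas n p - ebas n b | b <- iota k.+1 (n - k)] ++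
           [seq ebas n p + ebas n b | b <- iota k.+1 (n - k)] ++
           [:: ebas n p]).

Definition lam2 (n k : nat) (S : pred {ffun 'I_n -> int}) (i : nat) : nat :=
  let p := (k.+1 - i)%N in
  count S [seq ebas n a + ebas n p | a <- iota 1 p.-1].

Definition oneline (k r : nat) (y z v : nat -> nat) : nat -> int :=
  fun a => if (a <= k - r)%N then (y a)%:Z
           else if (a <= k)%N then - (z (k.+1 - a)%N)%:Z
           else (v (a - k)%N)%:Z.

(* Main.v *)
Require Import Defs.
From mathcomp Require Import all_boot all_order all_algebra.
From mathcomp Require Import zify.
Import Order.TTheory GRing.Theory Num.Theory.

Definition vec1 n (s : int) (A : nat) : {ffun 'I_n -> int} :=
  [ffun j : 'I_n => (s * ((j.+1 == A)%N)%:Z)%R].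

Lemma ffD n (f g : {ffun 'I_n -> int}) j : (f + g)%R j = (f j + g j)%R.
Proof. by rewrite !ffunE. Qed.
Lemma ffN n (f : {ffun 'I_n -> int}) j : (- f)%R j = (- f j)%R.
Proof. by rewrite !ffunE. Qed.

Lemma ebas_vec1 n a : ebas n a = vec1 n 1 a.
Proof. by apply/ffunP => j; rewrite !ffunE mul1r. Qed.

Lemma vec1_opp n s A : (- vec1 n s A)%R = vec1 n (- s) A.
Proof. by apply/ffunP => j; rewrite !ffunE mulNr. Qed.

Lemma act_add n w x y : act n w (x + y)%R = (act n w x + act n w y)%R.
Proof.
apply/ffunP => j; rewrite !ffunE -big_split /=; apply: eq_bigr => a _.
by rewrite ffD mulrDl.
Qed.

Lemma act_vec1 n w s p : (1 <= p)%N -> (p <= n)%N ->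
  act n w (vec1 n s p) = vec1 n (s * sgnint (w p))%R (absz (w p)).
Proof.
move=> h1 h2; have hp : (p.-1 < n)%N by lia.
apply/ffunP => j; rewrite !ffunE (bigD1 (Ordinal hp)) //= big1 ?addr0.
  rewrite ffunE /= prednK // eqxx mulr1 eq_sym.
  by case: eqP => _; rewrite ?mulr1 ?mulr0.
move=> a /eqP ha; rewrite ffunE.
have -> : (a.+1 == p) = false.
  apply/eqP => e; apply: ha; apply: val_inj => /=; lia.
by rewrite mulr0 mul0r.
Qed.

Lemma negrootsE n x : (x \in negroots n) = ((- x)%R \in posroots n).
Proof. by rewrite -{1}(opprK x) /negroots mem_map //; exact: oppr_inj. Qed.

Definition Pld n (x : {ffun 'I_n -> int}) :=
  exists j : 'I_n, x j = 1%R /\ forall j' : 'I_n, (j' < j)%N -> x j' = 0%R.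

Arguments Pld {n}.
Lemma notP n (x : {ffun 'I_n -> int}) (m : 'I_n) :
  x m = (-1)%R -> (forall j' : 'I_n, (j' < m)%N -> x j' = 0%R) -> ~ Pld x.
Proof.
move=> hm hl [j [hj hj']].
case: (ltngtP j m) => c.
- by move: (hl _ c); rewrite hj.
- by move: (hj' _ c); rewrite hm.
- have e : j = m by apply: val_inj.
  by move: hj; rewrite e hm.
Qed.

Lemma posroots_P n x : x \in posroots n -> Pld x.
Proof.
rewrite /posroots !mem_cat => /orP [|/orP []].
- move/allpairsPdep => [a [b [ha hb ->]]].
  move: ha hb; rewrite !mem_iota => ha hb.
  have hj : (a.-1 < n)%N by lia.
  exists (Ordinal hj); split.
    rewrite ffD ffN !ffunE /=.
    have -> : a.-1.+1 = a by lia.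
    have -> : (a == b) = false by apply/eqP; lia.
    by rewrite eqxx.
  move=> j' /= hj'; rewrite ffD ffN !ffunE.
  have -> : (j'.+1 == a) = false by apply/eqP; lia.
  have -> : (j'.+1 == b) = false by apply/eqP; lia.
  by [].
- move/allpairsPdep => [a [b [ha hb ->]]].
  move: ha hb; rewrite !mem_iota => ha hb.
  have hj : (a.-1 < n)%N by lia.
  exists (Ordinal hj); split.
    rewrite ffD !ffunE /=.
    have -> : a.-1.+1 = a by lia.
    have -> : (a == b) = false by apply/eqP; lia.
    by rewrite eqxx.
  move=> j' /= hj'; rewrite ffD !ffunE.
  have -> : (j'.+1 == a) = false by apply/eqP; lia.
  have -> : (j'.+1 == b) = false by apply/eqP; lia.
  by [].
- move/mapP => [a ha ->].
  move: ha; rewrite !mem_iota => ha.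
  have hj : (a.-1 < n)%N by lia.
  exists (Ordinal hj); split.
    rewrite !ffunE /=.
    have -> : a.-1.+1 = a by lia.
    by rewrite eqxx.
  move=> j' /= hj'; rewrite !ffunE.
  have -> : (j'.+1 == a) = false by apply/eqP; lia.
  by [].
Qed.

Lemma vec1E n s A (j : 'I_n) : vec1 n s A j = (s * ((j.+1 == A)%N)%:Z)%R.
Proof. by rewrite ffunE. Qed.

Lemma pos_sub n a b : (1 <= a)%N -> (a < b)%N -> (b <= n)%N ->
  (ebas n a - ebas n b)%R \in posroots n.
Proof.
move=> h1 h2 h3; rewrite /posroots mem_cat; apply/orP; left.
apply: (allpairs_f_dep (fun a b => (ebas n a - ebas n b)%R)); rewrite mem_iota; lia.
Qed.

Lemma pos_add n a b : (1 <= a)%N -> (a < b)%N -> (b <= n)%N ->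
  (ebas n a + ebas n b)%R \in posroots n.
Proof.
move=> h1 h2 h3; rewrite /posroots !mem_cat; apply/orP; right; apply/orP; left.
apply: (allpairs_f_dep (fun a b => (ebas n a + ebas n b)%R)); rewrite mem_iota; lia.
Qed.

Lemma pos_one n a : (1 <= a)%N -> (a <= n)%N -> ebas n a \in posroots n.
Proof.
move=> h1 h3; rewrite /posroots !mem_cat; apply/orP; right; apply/orP; right.
apply: map_f; rewrite mem_iota; lia.
Qed.

Definition pm1 (s : int) := (s == 1%R) || (s == (-1)%R).

Lemma pos_pair n s t A B : (1 <= A)%N -> (A < B)%N -> (B <= n)%N -> pm1 s -> pm1 t ->
  ((vec1 n s A + vec1 n t B)%R \in posroots n) = (s == 1%R).
Proof.
move=> h1 h2 h3 /orP [] /eqP -> /orP [] /eqP ->.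
- by rewrite -!ebas_vec1 pos_add.
- by rewrite -vec1_opp -!ebas_vec1 pos_sub.
- rewrite (_ : ((-1 : int)%R == 1%R) = false) //; apply/negP => /posroots_P; have hj : (A.-1 < n)%N by lia.
  apply: (@notP _ _ (Ordinal hj)).
    rewrite ffD !vec1E /=.
    have -> : A.-1.+1 = A by lia.
    rewrite (_ : (A == B) = false); last by apply/eqP; lia.
    by rewrite eqxx mulr1 mulr0 addr0.
  move=> j' /= hj'; rewrite ffD !vec1E.
  have -> : (j'.+1 == A) = false by apply/eqP; lia.
  have -> : (j'.+1 == B) = false by apply/eqP; lia.
  by [].
- rewrite (_ : ((-1 : int)%R == 1%R) = false) //; apply/negP => /posroots_P; have hj : (A.-1 < n)%N by lia.
  apply: (@notP _ _ (Ordinal hj)).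
    rewrite ffD !vec1E /=.
    have -> : A.-1.+1 = A by lia.
    rewrite (_ : (A == B) = false); last by apply/eqP; lia.
    by rewrite eqxx mulr1 mulr0 addr0.
  move=> j' /= hj'; rewrite ffD !vec1E.
  have -> : (j'.+1 == A) = false by apply/eqP; lia.
  have -> : (j'.+1 == B) = false by apply/eqP; lia.
  by [].
Qed.

Lemma pos_single n s A : (1 <= A)%N -> (A <= n)%N -> pm1 s ->
  (vec1 n s A \in posroots n) = (s == 1%R).
Proof.
move=> h1 h3 /orP [] /eqP ->.
- by rewrite -!ebas_vec1 pos_one.
- rewrite (_ : ((-1 : int)%R == 1%R) = false) //; apply/negP => /posroots_P; have hj : (A.-1 < n)%N by lia.
  apply: (@notP _ _ (Ordinal hj)).
    rewrite !vec1E /=.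
    have -> : A.-1.+1 = A by lia.
    by rewrite eqxx mulr1.
  move=> j' /= hj'; rewrite !vec1E.
  have -> : (j'.+1 == A) = false by apply/eqP; lia.
  by [].
Qed.

Lemma pm1_sgn x : pm1 (sgnint x).
Proof. by rewrite /pm1 /sgnint; case: ifP. Qed.
Lemma pm1_opp s : pm1 s -> pm1 (- s)%R.
Proof. by case/orP => /eqP ->. Qed.
Lemma pm1_mul s t : pm1 s -> pm1 t -> pm1 (s * t)%R.
Proof. by case/orP => /eqP -> /orP [] /eqP ->. Qed.

Lemma inv_pair n w p b t : (1 <= p)%N -> (p < b)%N -> (b <= n)%N -> pm1 t ->
  (1 <= absz (w p) <= n)%N -> (1 <= absz (w b) <= n)%N -> absz (w p) != absz (w b) ->
  Inv n w (ebas n p + vec1 n t b)%R =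
  (if (absz (w p) < absz (w b))%N then ((- sgnint (w p))%R == 1%R)
   else ((- (t * sgnint (w b)))%R == 1%R)).
Proof.
move=> h1 h2 h3 ht /andP [hA1 hA2] /andP [hB1 hB2] hne.
rewrite /Inv ebas_vec1 pos_pair // eqxx /= negrootsE act_add !act_vec1 //; try lia.
rewrite mul1r opprD !vec1_opp.
case: ltngtP => c.
- by rewrite pos_pair // ?pm1_opp ?pm1_mul ?pm1_sgn.
- by rewrite addrC pos_pair // ?pm1_opp ?pm1_mul ?pm1_sgn.
- by move: hne; rewrite c eqxx.
Qed.

Lemma inv_single n w p : (1 <= p)%N -> (p <= n)%N ->
  (1 <= absz (w p) <= n)%N ->
  Inv n w (ebas n p) = ((- sgnint (w p))%R == 1%R).
Proof.
move=> h1 h3 /andP [hA1 hA2].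
rewrite /Inv ebas_vec1 pos_single // eqxx /= negrootsE !act_vec1 //.
by rewrite mul1r !vec1_opp pos_single // ?pm1_opp ?pm1_sgn.
Qed.

Lemma uniq_map_inj (T1 T2 : eqType) (f : T1 -> T2) (s : seq T1) x y :
  uniq (map f s) -> x \in s -> y \in s -> f x = f y -> x = y.
Proof.
elim: s => // h t IH /= /andP [hn hu].
rewrite !in_cons => /orP [/eqP -> | hx] /orP [/eqP -> | hy] // e.
- by move: hn; rewrite e map_f.
- by move: hn; rewrite -e map_f.
- exact: IH.
Qed.

Arguments uniq_map_inj {T1 T2 f s x y}.
Lemma sgnP m : sgnint (Posz m) = 1%R.
Proof. by []. Qed.
Lemma sgnN m : (0 < m)%N -> sgnint (- (Posz m))%R = (-1)%R.
Proof. by move=> h; rewrite /sgnint oppr_lt0 ltz_nat h. Qed.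

Theorem lemma3p6 (n k r : nat) (y z v : nat -> nat) :
  (1 <= k)%N -> (k < n)%N -> (r <= k)%N ->
  (* w is a signed permutation of 1..n *)
  perm_eq [seq absz (oneline k r y z v a) | a <- iota 1 n] (iota 1 n) ->
  (* y_1 < ... < y_{k-r} *)
  (forall a b, (1 <= a)%N -> (a < b)%N -> (b <= k - r)%N -> (y a < y b)%N) ->
  (* z_r > ... > z_1 *)
  (forall a b, (1 <= a)%N -> (a < b)%N -> (b <= r)%N -> (z a < z b)%N) ->
  (* v_1 < ... < v_{n-k} *)
  (forall a b, (1 <= a)%N -> (a < b)%N -> (b <= n - k)%N -> (v a < v b)%N) ->
  forall i, (1 <= i)%N -> (i <= k)%N ->
    lam1 n k (Inv n (oneline k r y z v)) i =
      (if (i <= r)%N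
       then (n.+1 - k + count (fun l => z i < v l) (iota 1 (n - k)))%N
       else count (fun l => v l < y (k.+1 - i)) (iota 1 (n - k)))
    /\
    lam2 n k (Inv n (oneline k r y z v)) i =
      (if (i <= r)%N
       then (count (fun q => z i < z q) (iota 1 r)
             + count (fun t => z i < y t) (iota 1 (k - r)))%N
       else 0%N).
Proof.
move=> hk hkn hrk hperm hy hz hv i hi1 hik.
set w := oneline k r y z v.
have Hrange : forall a, (1 <= a <= n)%N -> (1 <= absz (w a) <= n)%N.
  move=> a ha; have : absz (w a) \in iota 1 n.
    by rewrite -(perm_mem hperm); apply: map_f; rewrite mem_iota; lia.
  rewrite mem_iota; lia.
have Huniq : uniq [seq absz (w a) | a <- iota 1 n] by rewrite (perm_uniq hperm) iota_uniq.
have Hinj : forall a b, (1 <= a <= n)%N -> (1 <= b <= n)%N -> a != b ->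
    absz (w a) != absz (w b).
  move=> a b ha hb hab; apply/eqP => e; move/eqP: hab; apply.
  by apply: (uniq_map_inj Huniq _ _ e); rewrite mem_iota; lia.
have wY : forall a, (a <= k - r)%N -> w a = Posz (y a).
  by move=> a ha; rewrite /w /oneline ha.
have wZ : forall a, (k - r < a)%N -> (a <= k)%N -> w a = (- Posz (z (k.+1 - a)%N))%R.
  by move=> a h1 h2; rewrite /w /oneline ifF ?h2 //; apply/negbTE; rewrite -ltnNge.
have wV : forall l, (1 <= l)%N -> w (k + l) = Posz (v l).
  move=> l hl; rewrite /w /oneline ifF ?ifF; last 2 first.
  - apply/negbTE; rewrite -ltnNge; lia.
  - apply/negbTE; rewrite -ltnNge; lia.
  by rewrite addKn.
have Hi : iota k.+1 (n - k) = map (addn k) (iota 1 (n - k)) by rewrite -iotaDl addn1.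
set p := (k.+1 - i)%N.
have IP : forall a b t, (1 <= a)%N -> (a < b)%N -> (b <= n)%N -> pm1 t ->
    Inv n w (ebas n a + vec1 n t b)%R =
    (if (absz (w a) < absz (w b))%N then ((- sgnint (w a))%R == 1%R)
     else ((- (t * sgnint (w b)))%R == 1%R)).
  move=> a b t h1 h2 h3 ht; apply: inv_pair => //; try (apply: Hrange; lia).
  apply: Hinj; lia.
have hp1 : (1 <= p)%N by rewrite /p; lia.
have hpk : (p <= k)%N by rewrite /p; lia.
split.
  rewrite /lam1 -/p Hi !count_cat !count_map /=.
case: (leqP i r) => hir.
  have wp : w p = (- Posz (z i))%R by rewrite wZ /p; try lia; congr (- Posz (z _))%R; lia.
  have zi0 : (0 < z i)%N.
    by have := Hrange p; rewrite wp abszN /=; lia.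
  rewrite (@eq_in_count _ _ predT) ?count_predT ?size_iota; last first.
    move=> l; rewrite mem_iota => hl /=.
    rewrite (ebas_vec1 n (k+l)) vec1_opp IP; [|lia|lia|lia|by []].
    rewrite wp wV; last lia.
    by rewrite abszN /= sgnN // sgnP; case: ifP.
  rewrite (@eq_in_count _ _ (fun l => z i < v l)%N); last first.
    move=> l; rewrite mem_iota => hl /=.
    rewrite (ebas_vec1 n (k+l)) IP; [|lia|lia|lia|by []].
    rewrite wp wV; last lia.
    by rewrite abszN /= sgnN // sgnP; case: ifP.
  rewrite inv_single; [|lia|lia|apply: Hrange; lia].
  rewrite wp sgnN //=; lia.
have wp : w p = Posz (y p) by rewrite wY /p; lia.
have -> : count (preim (addn k)
       (preim (fun b : nat => (ebas n p + ebas n b)%R) (Inv n w)))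
    (iota 1 (n - k)) = 0%N.
  rewrite (@eq_in_count _ _ pred0) ?count_pred0 // => l; rewrite mem_iota => hl /=.
  rewrite (ebas_vec1 n (k+l)) IP; [|lia|lia|lia|by []].
  rewrite wp wV; last lia.
  by rewrite /= !sgnP; case: ifP.
rewrite (@eq_in_count _ _ (fun l => v l < y p)%N); last first.
  move=> l; rewrite mem_iota => hl /=.
  have hne := Hinj p (k + l); rewrite wp wV in hne; last lia.
  have {}hne : y p != v l by apply: hne; lia.
  rewrite (ebas_vec1 n (k+l)) vec1_opp IP; [|lia|lia|lia|by []].
  rewrite wp wV; last lia.
  rewrite /= !sgnP; case: ifP => h /=; lia.
rewrite inv_single; [|lia|lia|apply: Hrange; lia].
by rewrite wp sgnP /= !add0n addn0.
rewrite /lam2 -/p count_map.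
case: (leqP i r) => hir.
  have wp : w p = (- Posz (z i))%R by rewrite wZ /p; try lia; congr (- Posz (z _))%R; lia.
  have zi0 : (0 < z i)%N.
    by have := Hrange p; rewrite wp abszN /=; lia.
  have Zc : count (fun q => z i < z q)%N (iota 1 r) = (r - i)%N.
    rewrite (@eq_in_count _ _ (fun q => i < q)%N); last first.
      move=> q; rewrite mem_iota => hq /=.
      case: (ltngtP i q) => c.
      - by apply: hz; lia.
      - apply/negbTE; rewrite -leqNgt ltnW //; apply: hz; lia.
      - by rewrite c ltnn.
    have -> : iota 1 r = iota 1 i ++ iota (1 + i) (r - i) by rewrite -iotaD; congr iota; lia.
    rewrite count_cat (@eq_in_count _ _ pred0 (iota 1 i)) ?count_pred0; last first.
      by move=> q; rewrite mem_iota => hq /=; lia.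
    rewrite (@eq_in_count _ _ predT (iota (1+i) (r-i))) ?count_predT ?size_iota //.
    move=> q; rewrite mem_iota => hq /=; lia.
  rewrite Zc.
  have -> : iota 1 p.-1 = iota 1 (k - r) ++ iota (1 + (k - r)) (p.-1 - (k - r)).
    by rewrite -iotaD; congr iota; rewrite /p; lia.
  rewrite count_cat.
  rewrite (@eq_in_count _ _ (fun t => z i < y t)%N (iota 1 (k-r))); last first.
    move=> a; rewrite mem_iota => ha /=.
    have hne := Hinj a p; rewrite wp (wY a) in hne; last lia.
    rewrite abszN /= in hne.
    have {}hne : y a != z i by apply: hne; lia.
    rewrite (ebas_vec1 n p) IP; [|lia|lia|lia|by []].
    rewrite wp (wY a); last lia.
    rewrite abszN /= sgnN // sgnP; case: ifP => h /=; lia.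
  rewrite (@eq_in_count _ _ predT (iota (1 + (k-r)) _)) ?count_predT ?size_iota; last first.
    move=> a; rewrite mem_iota => ha /=.
    have zq : (0 < z (k.+1 - a))%N.
      by have := Hrange a; rewrite (wZ a); [rewrite abszN /=; lia|lia|lia].
    rewrite (ebas_vec1 n p) IP; [|lia|lia|lia|by []].
    rewrite wp (wZ a); [|lia|lia].
    by rewrite !abszN /= !sgnN //; case: ifP.
  rewrite /p addnC; congr (_ + _); lia.
have wp : w p = Posz (y p) by rewrite wY /p; lia.
rewrite (@eq_in_count _ _ pred0) ?count_pred0 // => a; rewrite mem_iota => ha /=.
rewrite (ebas_vec1 n p) IP; [|lia|lia|lia|by []].
rewrite wp (wY a); last lia.
by rewrite /= !sgnP; case: ifP.
Qed.
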